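(* Let $p>1$ and $h\in C[0,\infty)$ with $h(s)>0$ for $s>0$. Suppose that the equation $w''+h(s)|w|^{p-1}w=0$ has two solutions $\underline{w},\overline{w}$ on $[0,\infty)$ with $\underline{w}(0)=\overline{w}(0)=0$, $0<\underline{w}'(0)<\overline{w}'(0)$, and $\underline{w}(s)>0$, $\overline{w}(s)>0$ for $s>0$. Assume moreover that this equation has a solution $w$ with $w(0)=0$, $\underline{w}'(0)<w'(0)<\overline{w}'(0)$, $w(s)>0$ for $0<s<s_0$ and $w(s_0)=0$ for some $s_0>0$. Then for all sufficiently large $c>0$ the problem \[ w''+h(s)|w|^{p-1}w=0\ (0<s<c),\quad w(0)=w(c)=0,\quad w(s)>0\ (0<s<c), \] has two solutions $w_1,w_2$ with $\underline{w}'(0)<w_1'(0)<w'(0)<w_2'(0)<\overline{w}'(0)$. *)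

(* Defs.v *)
From Stdlib Require Import Reals Lra.
Open Scope R_scope.

Definition has_deriv_within (D : R -> Prop) (f : R -> R) (x d : R) : Prop :=
  forall eps : R, 0 < eps -> exists delta : R, 0 < delta /\
    forall y : R, D y -> y <> x -> Rabs (y - x) < delta ->
      Rabs ((f y - f x) / (y - x) - d) < eps.

Definition cont_within (D : R -> Prop) (f : R -> R) (x : R) : Prop :=
  forall eps : R, 0 < eps -> exists delta : R, 0 < delta /\
    forall y : R, D y -> Rabs (y - x) < delta -> Rabs (f y - f x) < eps.

(* |w|^(p-1) w ; equals 0 when w = 0 *)
Definition ppow (p w : R) : R := Rpower (Rabs w) (p - 1) * w.

Definition is_sol (h : R -> R) (p : R) (D : R -> Prop) (w dw : R -> R) : Prop :=
  forall s : R, D s ->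
    has_deriv_within D w s (dw s) /\
    has_deriv_within D dw s (- (h s * ppow p (w s))).

Definition halfline (s : R) : Prop := 0 <= s.
Definition interval0 (c : R) (s : R) : Prop := 0 <= s <= c.

(* Main.v *)
Require Import Defs.
From Stdlib Require Import Reals Lra Lia Classical ClassicalEpsilon FunctionalExtensionality.
From Coquelicot Require Import Coquelicot.
Open Scope R_scope.

Definition clip (a b x : R) : R := Rmax a (Rmin b x).

Lemma clip_in a b x : a <= b -> a <= clip a b x <= b.
Proof. intros; unfold clip, Rmax, Rmin; repeat destruct Rle_dec; lra. Qed.
Lemma clip_id a b x : a <= x <= b -> clip a b x = x.
Proof. intros; unfold clip, Rmax, Rmin; repeat destruct Rle_dec; lra. Qed.
Lemma clip_lip a b x y : a <= b -> Rabs (clip a b x - clip a b y) <= Rabs (x - y).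
Proof. intros; unfold clip, Rmax, Rmin; repeat destruct Rle_dec;
  unfold Rabs; repeat destruct Rcase_abs; lra. Qed.

Lemma cont_clip (D : R -> Prop) f a b : a <= b ->
  (forall x, a <= x <= b -> D x) ->
  (forall x, a <= x <= b -> cont_within D f x) ->
  forall x, continuity_pt (fun y => f (clip a b y)) x.
Proof.
  intros hab hD hc x eps heps.
  destruct (hc (clip a b x) (clip_in a b x hab) eps heps) as [d [hd H]].
  exists d; split; [lra|]. intros y [_ hy]. simpl in *. unfold R_dist in *.
  apply H. apply hD, clip_in; lra.
  eapply Rle_lt_trans; [apply clip_lip; lra| exact hy].
Qed.

Lemma deriv_within_of (D : R -> Prop) f x d :
  derivable_pt_lim f x d -> has_deriv_within D f x d.
Proof.
  intros H eps he. destruct (H eps he) as [[del hdel] Hd].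
  exists del; split; [exact hdel|]. intros y _ hyx hy.
  replace y with (x + (y - x)) at 1 by ring.
  apply Hd; [lra | exact hy].
Qed.

Lemma deriv_within_sub (D1 D2 : R -> Prop) f x d :
  (forall y, D2 y -> D1 y) -> has_deriv_within D1 f x d -> has_deriv_within D2 f x d.
Proof.
  intros hs H eps he. destruct (H eps he) as [del [hd Hd]].
  exists del; split; auto.
Qed.

Lemma cont_within_sub (D1 D2 : R -> Prop) f x :
  (forall y, D2 y -> D1 y) -> cont_within D1 f x -> cont_within D2 f x.
Proof.
  intros hs H eps he. destruct (H eps he) as [del [hd Hd]].
  exists del; split; auto.
Qed.

Lemma deriv_within_cont (D : R -> Prop) f x d :
  has_deriv_within D f x d -> cont_within D f x.
Proof.
  intros H eps he. destruct (H 1 Rlt_0_1) as [del [hd Hd]].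
  exists (Rmin del (eps / (Rabs d + 1 + 1))). split.
  { apply Rmin_pos; [lra|]. apply Rdiv_lt_0_compat; [lra|]. pose proof (Rabs_pos d); lra. }
  intros y hy hyx.
  destruct (Req_dec y x) as [->|hne]. { rewrite Rminus_diag, Rabs_R0; lra. }
  assert (hy1 : Rabs (y - x) < del) by (eapply Rlt_le_trans; [exact hyx| apply Rmin_l]).
  assert (hy2 : Rabs (y - x) < eps / (Rabs d + 1 + 1)) by (eapply Rlt_le_trans; [exact hyx| apply Rmin_r]).
  specialize (Hd y hy hne hy1).
  assert (hnz : y - x <> 0) by lra.
  assert (Heq : f y - f x = ((f y - f x) / (y - x) - d) * (y - x) + d * (y - x)) by (field; auto).
  rewrite Heq.
  eapply Rle_lt_trans; [apply Rabs_triang|]. rewrite !Rabs_mult.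
  assert (0 <= Rabs (y-x)) by apply Rabs_pos.
  assert (0 <= Rabs d) by apply Rabs_pos.
  assert (Rabs (y - x) * (Rabs d + 1 + 1) < eps).
  { apply (Rmult_lt_compat_r (Rabs d + 1 + 1)) in hy2; [|lra].
    unfold Rdiv in hy2. rewrite Rmult_assoc, Rinv_l in hy2; lra. }
  nra.
Qed.

Lemma deriv_interior (D : R -> Prop) f x d a b :
  a < x < b -> (forall y, a < y < b -> D y) ->
  has_deriv_within D f x d -> derivable_pt_lim f x d.
Proof.
  intros hx hD H eps he. destruct (H eps he) as [del [hd Hd]].
  assert (hp : 0 < Rmin del (Rmin (x - a) (b - x))) by (repeat apply Rmin_pos; lra).
  exists (mkposreal _ hp). intros k hk hka. simpl in hka.
  assert (h1 : Rabs k < del) by (eapply Rlt_le_trans; [exact hka| apply Rmin_l]).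
  assert (h2 : Rabs k < Rmin (x - a) (b - x)) by (eapply Rlt_le_trans; [exact hka| apply Rmin_r]).
  assert (h3 : Rabs k < x - a) by (eapply Rlt_le_trans; [exact h2| apply Rmin_l]).
  assert (h4 : Rabs k < b - x) by (eapply Rlt_le_trans; [exact h2| apply Rmin_r]).
  apply Rabs_def2 in h3; apply Rabs_def2 in h4.
  replace k with ((x + k) - x) at 2 by ring.
  apply Hd.
  - apply hD; lra.
  - lra.
  - replace (x + k - x) with k by ring; exact h1.
Qed.

Lemma mono_le (f df : R -> R) a b : a <= b ->
  (forall x, a < x < b -> derivable_pt_lim f x (df x)) ->
  (forall x, a < x < b -> df x <= 0) ->
  cont_within (fun y => a <= y <= b) f a ->
  cont_within (fun y => a <= y <= b) f b -> f b <= f a.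
Proof.
  intros hab hd hneg ca cb.
  destruct (Req_dec a b) as [->|hne]; [lra|].
  apply Rnot_lt_le; intro hlt.
  set (e := (f b - f a) / 3).
  assert (he : 0 < e) by (unfold e; lra).
  destruct (ca e he) as [d1 [hd1 H1]].
  destruct (cb e he) as [d2 [hd2 H2]].
  set (m := Rmin (Rmin d1 d2) ((b - a) / 3)).
  assert (hm0 : 0 < m) by (unfold m; repeat apply Rmin_pos; lra).
  assert (hm1 : m <= d1) by (unfold m; pose proof (Rmin_l (Rmin d1 d2) ((b-a)/3)); pose proof (Rmin_l d1 d2); lra).
  assert (hm2 : m <= d2) by (unfold m; pose proof (Rmin_l (Rmin d1 d2) ((b-a)/3)); pose proof (Rmin_r d1 d2); lra).
  assert (hm3 : m <= (b - a) / 3) by (unfold m; pose proof (Rmin_r (Rmin d1 d2) ((b-a)/3)); lra).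
  set (k := m / 2).
  assert (hk0 : 0 < k) by (unfold k; lra).
  assert (hk1 : k < d1) by (unfold k; lra).
  assert (hk2 : k < d2) by (unfold k; lra).
  assert (hk3 : k < (b - a) / 3) by (unfold k; lra).
  set (a' := a + k). set (b' := b - k).
  assert (Ha : Rabs (f a' - f a) < e).
  { apply H1; cbv beta; unfold a'; [lra|]. rewrite Rabs_right; lra. }
  assert (Hb : Rabs (f b' - f b) < e).
  { apply H2; cbv beta; unfold b'; [lra|]. rewrite Rabs_left; lra. }
  destruct (MVT_gen f a' b' df) as [c [hc Hc]].
  - intros x hx. rewrite Rmin_left in hx by (unfold a', b'; lra).
    rewrite Rmax_right in hx by (unfold a', b'; lra).
    apply is_derive_Reals, hd; unfold a', b' in *; lra.
  - intros x hx. rewrite Rmin_left in hx by (unfold a', b'; lra).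
    rewrite Rmax_right in hx by (unfold a', b'; lra).
    apply derivable_continuous_pt. exists (df x). apply hd; unfold a', b' in *; lra.
  - rewrite Rmin_left in hc by (unfold a', b'; lra).
    rewrite Rmax_right in hc by (unfold a', b'; lra).
    assert (df c <= 0) by (apply hneg; unfold a', b' in *; lra).
    assert (b' - a' > 0) by (unfold a', b'; lra).
    assert (f b' - f a' <= 0) by (rewrite Hc; nra).
    apply Rabs_def2 in Ha; apply Rabs_def2 in Hb. unfold e in *; lra.
Qed.

Lemma Rpower_pos' x y : 0 < Rpower x y.
Proof. unfold Rpower; apply exp_pos. Qed.

Lemma ppow_0 p : ppow p 0 = 0.
Proof. unfold ppow; ring. Qed.

Lemma ppow_nonneg p x : 0 <= x -> 0 <= ppow p x.
Proof. intros; unfold ppow. pose proof (Rpower_pos' (Rabs x) (p-1)). nra. Qed.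

Lemma ppow_pos p x : 0 < x -> 0 < ppow p x.
Proof. intros; unfold ppow. pose proof (Rpower_pos' (Rabs x) (p-1)). nra. Qed.

Lemma ppow_odd p x : ppow p (- x) = - ppow p x.
Proof. unfold ppow; rewrite Rabs_Ropp; ring. Qed.

Lemma ppow_pos_eq p x : 0 < x -> ppow p x = Rpower x p.
Proof.
  intros hx; unfold ppow. rewrite Rabs_right by lra.
  rewrite <- (Rpower_1 x) at 2 by exact hx. rewrite <- Rpower_plus. f_equal; ring.
Qed.

Lemma ppow_lip_pos p M x y : 1 < p -> 0 < M -> 0 <= x <= y -> y <= M ->
  0 <= ppow p y - ppow p x <= p * Rpower M (p - 1) * (y - x).
Proof.
  intros hp hM hxy hyM.
  assert (hRM : Rpower M (p-1) > 0) by apply Rpower_pos'.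
  destruct (Req_dec x 0) as [->|hx0].
  - rewrite ppow_0, Rminus_0_r, Rminus_0_r.
    destruct (Req_dec y 0) as [->|hy0]. { rewrite ppow_0; nra. }
    unfold ppow. rewrite Rabs_right by lra.
    assert (Rpower y (p-1) <= Rpower M (p-1)) by (apply Rle_Rpower_l; lra).
    pose proof (Rpower_pos' y (p-1)). assert (0 < y) by lra. split; [nra|]. apply Rle_trans with (Rpower M (p-1) * y); [nra|]. assert (0 <= (p - 1) * Rpower M (p-1) * y) by (apply Rmult_le_pos; nra). nra.
  - assert (hx : 0 < x) by lra.
    rewrite (ppow_pos_eq p y) by lra. rewrite (ppow_pos_eq p x) by lra.
    destruct (MVT_gen (fun z => Rpower z p) x y (fun z => p * Rpower z (p - 1))) as [c [hc Hc]].
    + intros z hz. rewrite Rmin_left in hz by lra. apply is_derive_Reals, derivable_pt_lim_power; lra.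
    + intros z hz. rewrite Rmin_left in hz by lra. apply derivable_continuous_pt.
      exists (p * Rpower z (p - 1)). apply derivable_pt_lim_power; lra.
    + rewrite Rmin_left in hc by lra. rewrite Rmax_right in hc by lra.
      rewrite Hc.
      assert (Rpower c (p-1) <= Rpower M (p-1)) by (apply Rle_Rpower_l; lra).
      pose proof (Rpower_pos' c (p-1)). split; [apply Rmult_le_pos; [apply Rmult_le_pos|]; lra|]. apply Rmult_le_compat_r; [lra|]. apply Rmult_le_compat_l; lra.
Qed.

Lemma ppow_lip p M x y : 1 < p -> 0 < M -> Rabs x <= M -> Rabs y <= M ->
  Rabs (ppow p x - ppow p y) <= p * Rpower M (p - 1) * Rabs (x - y).
Proof.
  intros hp hM.
  assert (hRM : Rpower M (p-1) > 0) by apply Rpower_pos'.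
  set (L := p * Rpower M (p - 1)).
  assert (hL : 0 < L) by (unfold L; nra).
  assert (key : forall x y, x <= y -> Rabs x <= M -> Rabs y <= M ->
     Rabs (ppow p x - ppow p y) <= L * Rabs (x - y)).
  { clear x y. intros x y hxy hx hy.
    apply Rabs_le_between in hx; apply Rabs_le_between in hy.
    rewrite (Rabs_left1 (x - y)) by lra.
    destruct (Rle_dec 0 x).
    - pose proof (ppow_lip_pos p M x y hp hM (conj r hxy) (proj2 hy)).
      rewrite Rabs_left1 by lra. fold L in H. lra.
    - apply Rnot_le_lt in n. destruct (Rle_dec y 0); [|apply Rnot_le_lt in n0].
      + assert (h1 : 0 <= - y <= - x) by lra. assert (h2 : - x <= M) by lra.
        pose proof (ppow_lip_pos p M (-y) (-x) hp hM h1 h2).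
        rewrite !ppow_odd in H. fold L in H.
        rewrite Rabs_left1 by lra. lra.
      + assert (h1 : 0 <= 0 <= y) by lra. assert (h2 : y <= M) by lra.
        assert (h3 : 0 <= 0 <= - x) by lra. assert (h4 : - x <= M) by lra.
        pose proof (ppow_lip_pos p M 0 y hp hM h1 h2).
        pose proof (ppow_lip_pos p M 0 (-x) hp hM h3 h4).
        rewrite ppow_odd, ppow_0 in *. fold L in H, H0.
        rewrite Rabs_left1 by lra. lra. }
  intros hx hy. destruct (Rle_dec x y).
  - apply key; auto.
  - rewrite Rabs_minus_sym, (Rabs_minus_sym x). apply key; auto; lra.
Qed.

Definition Iop (psi : R -> R) (r : R) : R := RInt psi 0 r.

Lemma ex_RInt_cont psi a b : (forall t, continuity_pt psi t) -> ex_RInt psi a b.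
Proof. intros H. apply (@ex_RInt_continuous R_CompleteNormedModule). intros z _. apply continuity_pt_filterlim, H. Qed.

Lemma Iop_deriv psi : (forall t, continuity_pt psi t) -> forall r, derivable_pt_lim (Iop psi) r (psi r).
Proof.
  intros H r. apply is_derive_Reals. apply (is_derive_RInt psi (Iop psi) 0 r).
  - exists (mkposreal 1 Rlt_0_1). intros y _. unfold Iop. apply (@RInt_correct R_CompleteNormedModule), ex_RInt_cont, H.
  - apply continuity_pt_filterlim, H.
Qed.

Lemma Iop_cont psi : (forall t, continuity_pt psi t) -> forall r, continuity_pt (Iop psi) r.
Proof. intros H r. apply derivable_continuous_pt. exists (psi r). apply Iop_deriv, H. Qed.

Lemma Iop_minus psi1 psi2 : (forall t, continuity_pt psi1 t) -> (forall t, continuity_pt psi2 t) ->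
  forall r, Iop (fun t => psi1 t - psi2 t) r = Iop psi1 r - Iop psi2 r.
Proof.
  intros H1 H2 r. unfold Iop. 
  pose proof (RInt_minus psi1 psi2 0 r (ex_RInt_cont _ _ _ H1) (ex_RInt_cont _ _ _ H2)) as E.
  unfold minus, plus, opp in E; simpl in E. exact E.
Qed.

Lemma Iop_0 psi : Iop psi 0 = 0.
Proof. unfold Iop. rewrite RInt_point. reflexivity. Qed.

Lemma Iop_const_bound psi s K : (forall t, continuity_pt psi t) -> 0 <= s ->
  (forall t, 0 <= t <= s -> Rabs (psi t) <= K) -> Rabs (Iop psi s) <= s * K.
Proof.
  intros H hs hb. unfold Iop. replace (s * K) with ((s - 0) * K) by ring.
  apply abs_RInt_le_const; auto. apply ex_RInt_cont, H.
Qed.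

Lemma dexp C lam x : derivable_pt_lim (fun t => C * exp (lam * t)) x (C * (exp (lam * x) * (lam * 1))).
Proof.
  apply (derivable_pt_lim_scal (fun t => exp (lam * t))).
  apply (derivable_pt_lim_comp (fun t => lam * t) exp).
  apply derivable_pt_lim_scal, derivable_pt_lim_id. apply derivable_pt_lim_exp.
Qed.

Lemma Iop_exp_bound psi s K lam : (forall t, continuity_pt psi t) -> 0 <= s -> 0 < lam -> 0 <= K ->
  (forall t, 0 <= t <= s -> Rabs (psi t) <= K * exp (lam * t)) ->
  Rabs (Iop psi s) <= K * exp (lam * s) / lam.
Proof.
  intros H hs hl hK hb. unfold Iop.
  eapply Rle_trans. apply abs_RInt_le; auto. apply ex_RInt_cont, H.
  assert (hex : forall t, continuity_pt (fun t => K * exp (lam * t)) t).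
  { intros t. apply continuity_pt_mult. apply continuity_pt_const; intros ? ?; auto.
    apply derivable_continuous_pt. exists (exp (lam * t) * (lam * 1)).
    apply (derivable_pt_lim_comp (fun t => lam * t) exp).
    apply derivable_pt_lim_scal, derivable_pt_lim_id. apply derivable_pt_lim_exp. }
  eapply Rle_trans. apply RInt_le; auto.
  - apply ex_RInt_cont. intros t. apply (continuity_pt_comp psi Rabs); [apply H | apply Rcontinuity_abs].
  - apply ex_RInt_cont, hex.
  - intros x hx. apply hb; lra.
  - assert (E : is_RInt (fun t => K * exp (lam * t)) 0 s
               (minus (K / lam * exp (lam * s)) (K / lam * exp (lam * 0)))).
    { apply (is_RInt_derive (fun t => (K / lam) * exp (lam * t))).
      - intros x _. apply is_derive_Reals.
        replace (K * exp (lam * x)) with ((K / lam) * (exp (lam * x) * (lam * 1))) by (field; lra).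
        apply dexp.
      - intros x _. apply continuity_pt_filterlim, hex. }
    rewrite (is_RInt_unique _ _ _ _ E). unfold minus, plus, opp; simpl.
    rewrite Rmult_0_r, exp_0.
    assert (0 <= K / lam) by (apply Rmult_le_pos; [lra| left; apply Rinv_0_lt_compat; lra]).
    unfold Rdiv in *. lra.
Qed.

Lemma exp_mono a b : a <= b -> exp a <= exp b.
Proof. intros [h|h]; [left; apply exp_increasing; auto | rewrite h; lra]. Qed.

Lemma dbl_minus psi1 psi2 s : (forall t, continuity_pt psi1 t) -> (forall t, continuity_pt psi2 t) ->
  Iop (Iop psi1) s - Iop (Iop psi2) s = Iop (Iop (fun t => psi1 t - psi2 t)) s.
Proof.
  intros H1 H2. rewrite <- Iop_minus by (apply Iop_cont; auto).
  f_equal. apply functional_extensionality. intros r. rewrite Iop_minus; auto.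
Qed.

Lemma dbl_exp_bound psi s K lam : (forall t, continuity_pt psi t) -> 0 <= s -> 0 < lam -> 0 <= K ->
  (forall t, 0 <= t <= s -> Rabs (psi t) <= K * exp (lam * t)) ->
  Rabs (Iop (Iop psi) s) <= s * (K * exp (lam * s) / lam).
Proof.
  intros H hs hl hK hb. apply Iop_const_bound; [apply Iop_cont, H | exact hs |].
  intros r hr. eapply Rle_trans. apply (Iop_exp_bound psi r K lam); auto; try lra.
  intros t ht; apply hb; lra.
  unfold Rdiv. apply Rmult_le_compat_r. left; apply Rinv_0_lt_compat; lra.
  apply Rmult_le_compat_l; auto. apply exp_mono. nra.
Qed.

Lemma dbl_const_bound psi s K : (forall t, continuity_pt psi t) -> 0 <= s -> 0 <= K ->
  (forall t, 0 <= t <= s -> Rabs (psi t) <= K) ->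
  Rabs (Iop (Iop psi) s) <= s * (s * K).
Proof.
  intros H hs hK hb. apply Iop_const_bound; [apply Iop_cont, H | exact hs |].
  intros r hr. eapply Rle_trans. apply Iop_const_bound; auto; try lra.
  intros t ht; apply hb; lra. nra.
Qed.

Lemma Iop_deriv2 psi : (forall t, continuity_pt psi t) -> forall al s,
  derivable_pt_lim (fun s => al * s - Iop (Iop psi) s) s (al - Iop psi s).
Proof.
  intros H al s. apply derivable_pt_lim_minus.
  - replace al with (al * 1) at 2 by ring. apply (derivable_pt_lim_scal id), derivable_pt_lim_id.
  - apply Iop_deriv, Iop_cont, H.
Qed.

Lemma Iop_deriv1 psi : (forall t, continuity_pt psi t) -> forall al s,
  derivable_pt_lim (fun s => al - Iop psi s) s (- psi s).
Proof.
  intros H al s. replace (- psi s) with (0 - psi s) by ring. apply derivable_pt_lim_minus.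
  - apply derivable_pt_lim_const.
  - apply Iop_deriv, H.
Qed.

Definition picH (hh gg : R -> R) (H L Gb : R) : Prop :=
  0 <= H /\ 0 < L /\ 0 <= Gb /\ (forall t, continuity_pt hh t) /\ (forall t, Rabs (hh t) <= H) /\
  (forall x y, Rabs (gg x - gg y) <= L * Rabs (x - y)) /\ (forall x, Rabs (gg x) <= Gb).

Lemma lip_cont gg L : 0 < L -> (forall x y, Rabs (gg x - gg y) <= L * Rabs (x - y)) -> forall x, continuity_pt gg x.
Proof.
  intros hL H x eps he. exists (eps / L). split. apply Rdiv_lt_0_compat; lra.
  intros y [_ hy]. simpl in *. unfold R_dist in *.
  eapply Rle_lt_trans. apply H.
  apply (Rmult_lt_compat_l L) in hy; auto. unfold Rdiv in hy.
  rewrite <- Rmult_assoc, (Rmult_comm L eps), Rmult_assoc, Rinv_r, Rmult_1_r in hy; lra.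
Qed.

Lemma phi_cont hh gg H L Gb v : picH hh gg H L Gb -> (forall t, continuity_pt v t) ->
  forall t, continuity_pt (fun t => hh t * gg (v t)) t.
Proof.
  intros [hH [hL [hG [hc [hb [hl hgb]]]]]] hv t.
  apply continuity_pt_mult; auto. apply (continuity_pt_comp v gg); auto.
  apply (lip_cont gg L); auto.
Qed.

Fixpoint pic (hh gg : R -> R) (al : R) (n : nat) : R -> R :=
  match n with
  | O => fun s => al * s
  | S n => fun s => al * s - Iop (Iop (fun t => hh t * gg (pic hh gg al n t))) s
  end.

Lemma pic_cont hh gg H L Gb al : picH hh gg H L Gb -> forall n t, continuity_pt (pic hh gg al n) t.
Proof.
  intros hp n. induction n as [|n IH]; intros t; simpl.
  - apply derivable_continuous_pt. exists (al * 1). apply (derivable_pt_lim_scal id), derivable_pt_lim_id.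
  - apply derivable_continuous_pt. eexists. apply Iop_deriv2. apply (phi_cont hh gg H L Gb); auto.
Qed.

Lemma pic_step hh gg H L Gb al c n s : picH hh gg H L Gb -> 0 < c -> 0 <= s <= c ->
  Rabs (pic hh gg al (S n) s - pic hh gg al n s) <=
  (c * (c * H * Gb) + 1) * (/2) ^ n * exp ((2 * c * H * L + 1) * s).
Proof.
  intros hp hc. pose proof hp as [hH [hL [hG [hhc [hb [hl hgb]]]]]].
  set (B := c * (c * H * Gb) + 1). set (lam := 2 * c * H * L + 1).
  assert (hB : 0 < B) by (unfold B; assert (0 <= c * H * Gb) by (repeat apply Rmult_le_pos; lra); nra).
  assert (hlam : 0 < lam) by (unfold lam; assert (0 <= c * H * L) by (repeat apply Rmult_le_pos; lra); lra).
  revert s. induction n as [|n IH]; intros s hs.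
  - simpl. replace (al * s - Iop (Iop (fun t => hh t * gg (al * t))) s - al * s)
      with (- Iop (Iop (fun t => hh t * gg (al * t))) s) by ring.
    rewrite Rabs_Ropp. eapply Rle_trans. apply dbl_const_bound with (K := H * Gb).
    + apply (phi_cont hh gg H L Gb (fun t => al * t)); auto. apply (pic_cont hh gg H L Gb al hp 0).
    + lra.
    + apply Rmult_le_pos; lra.
    + intros t _. rewrite Rabs_mult. apply Rmult_le_compat; auto using Rabs_pos.
    + assert (1 <= exp (lam * s)) by (rewrite <- exp_0; apply exp_mono; nra).
      assert (s * (s * (H * Gb)) <= c * (c * H * Gb)).
      { assert (0 <= H * Gb) by (apply Rmult_le_pos; lra).
        assert (s * (H * Gb) <= c * (H * Gb)) by (apply Rmult_le_compat_r; lra).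
        replace (c * (c * H * Gb)) with (c * (c * (H * Gb))) by ring.
        apply Rmult_le_compat; try lra. apply Rmult_le_pos; lra. }
      simpl. rewrite Rmult_1_r. apply Rle_trans with B; [unfold B; lra|]. rewrite <- (Rmult_1_r B) at 1. apply Rmult_le_compat_l; lra.
  - change (pic hh gg al (S (S n)) s - pic hh gg al (S n) s) with
      ((al * s - Iop (Iop (fun t => hh t * gg (pic hh gg al (S n) t))) s) -
       (al * s - Iop (Iop (fun t => hh t * gg (pic hh gg al n t))) s)).
    replace ((al * s - Iop (Iop (fun t => hh t * gg (pic hh gg al (S n) t))) s) -
       (al * s - Iop (Iop (fun t => hh t * gg (pic hh gg al n t))) s)) with
      (- (Iop (Iop (fun t => hh t * gg (pic hh gg al (S n) t))) s -
          Iop (Iop (fun t => hh t * gg (pic hh gg al n t))) s)) by ring.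
    rewrite Rabs_Ropp, dbl_minus by (apply (phi_cont hh gg H L Gb); auto; apply (pic_cont hh gg H L Gb al hp)).
    eapply Rle_trans. apply dbl_exp_bound with (K := H * L * (B * (/2)^n)) (lam := lam).
    + intros t. apply continuity_pt_minus; apply (phi_cont hh gg H L Gb); auto; apply (pic_cont hh gg H L Gb al hp).
    + lra.
    + exact hlam.
    + assert (0 < (/2)^n) by (apply pow_lt; lra). repeat apply Rmult_le_pos; lra.
    + intros t ht. rewrite <- Rmult_minus_distr_l, Rabs_mult.
      specialize (IH t ltac:(lra)).
      assert (Rabs (gg (pic hh gg al (S n) t) - gg (pic hh gg al n t)) <= L * (B * (/2)^n * exp (lam * t))).
      { eapply Rle_trans. apply hl. apply Rmult_le_compat_l; lra. }
      replace (H * L * (B * (/ 2) ^ n) * exp (lam * t)) with (H * (L * (B * (/2)^n * exp (lam * t)))) by ring.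
      apply Rmult_le_compat; auto using Rabs_pos.
    + assert (0 < (/2)^n) by (apply pow_lt; lra).
      assert (0 < exp (lam * s)) by apply exp_pos.
      set (X := B * (/2)^n * exp (lam * s)).
      assert (hX : 0 < X) by (unfold X; repeat apply Rmult_lt_0_compat; auto).
      replace (s * (H * L * (B * (/ 2) ^ n) * exp (lam * s) / lam)) with (s * H * L / lam * X) by (unfold X; field; lra).
      replace (B * (/ 2) ^ S n * exp (lam * s)) with (/2 * X) by (unfold X; simpl; ring).
      apply Rmult_le_compat_r; [lra|].
      assert (s * H * L <= c * H * L) by (repeat apply Rmult_le_compat_r; lra).
      apply (Rmult_le_reg_r lam); auto. unfold Rdiv. rewrite Rmult_assoc, Rinv_l by lra.
      unfold lam. nra.
Qed.

Lemma half_pow_small K eps : 0 < eps -> exists N, K * (/2) ^ N < eps.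
Proof.
  intros he. destruct (Rle_dec K 0) as [hK|hK].
  - exists O. simpl. lra.
  - assert (hK' : 0 < K) by lra.
    destruct (pow_lt_1_zero (/2) ltac:(rewrite Rabs_right; lra) (eps / K) ltac:(apply Rdiv_lt_0_compat; lra)) as [N HN].
    exists N. specialize (HN N (le_n N)). rewrite Rabs_right in HN by (left; apply pow_lt; lra).
    apply (Rmult_lt_compat_l K) in HN; auto. unfold Rdiv in HN.
    rewrite <- Rmult_assoc, (Rmult_comm K eps), Rmult_assoc, Rinv_r, Rmult_1_r in HN; lra.
Qed.

Lemma pic_cauchy hh gg H L Gb al c : picH hh gg H L Gb -> 0 < c ->
  forall n m s, (n <= m)%nat -> 0 <= s <= c ->
  Rabs (pic hh gg al m s - pic hh gg al n s) <=
  2 * (c * (c * H * Gb) + 1) * exp ((2 * c * H * L + 1) * c) * (/2) ^ n.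
Proof.
  intros hp hc n m s hnm hs.
  set (B := c * (c * H * Gb) + 1). set (lam := 2 * c * H * L + 1).
  pose proof hp as [hH [hL [hG _]]].
  assert (hB : 0 < B) by (unfold B; assert (0 <= c * H * Gb) by (repeat apply Rmult_le_pos; lra); nra).
  assert (hlam : 0 < lam) by (unfold lam; assert (0 <= c * H * L) by (repeat apply Rmult_le_pos; lra); lra).
  set (E := exp (lam * c)).
  assert (hE : 0 < E) by apply exp_pos.
  assert (key : forall j, Rabs (pic hh gg al (n + j) s - pic hh gg al n s) <= 2 * B * E * ((/2)^n - (/2)^(n+j))).
  { induction j as [|j IH].
    - rewrite Nat.add_0_r, Rminus_diag, Rabs_R0, Rminus_diag. lra.
    - pose proof (pic_step hh gg H L Gb al c (n + j) s hp hc hs) as Hs. fold B lam in Hs.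
      rewrite Nat.add_succ_r.
      replace (pic hh gg al (S (n + j)) s - pic hh gg al n s) with
        ((pic hh gg al (S (n + j)) s - pic hh gg al (n + j) s) + (pic hh gg al (n + j) s - pic hh gg al n s)) by ring.
      eapply Rle_trans. apply Rabs_triang.
      assert (exp (lam * s) <= E) by (apply exp_mono; apply Rmult_le_compat_l; lra).
      assert (0 < (/2) ^ (n + j)) by (apply pow_lt; lra).
      assert (B * (/2)^(n+j) * exp (lam * s) <= B * (/2)^(n+j) * E) by (apply Rmult_le_compat_l; [apply Rmult_le_pos|]; lra).
      assert (Hp : (/2) ^ S (n + j) = (/2) ^ (n + j) * (1/2)) by (simpl; field). rewrite Hp. lra. }
  replace m with (n + (m - n))%nat by lia.
  eapply Rle_trans. apply key.
  assert (0 < (/2) ^ (n + (m - n))) by (apply pow_lt; lra).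
  assert (0 < B * E) by (apply Rmult_lt_0_compat; lra).
  fold B lam E. nra.
Qed.

Definition ulim hh gg al s : R := real (Lim_seq (fun n => pic hh gg al n s)).

Lemma ulim_bound hh gg H L Gb al c : picH hh gg H L Gb -> 0 < c ->
  forall s n, 0 <= s <= c ->
  Rabs (ulim hh gg al s - pic hh gg al n s) <=
  2 * (c * (c * H * Gb) + 1) * exp ((2 * c * H * L + 1) * c) * (/2) ^ n.
Proof.
  intros hp hc s n hs.
  set (Q := 2 * (c * (c * H * Gb) + 1) * exp ((2 * c * H * L + 1) * c)).
  assert (hfin : ex_finite_lim_seq (fun n => pic hh gg al n s)).
  { apply ex_lim_seq_cauchy_corr. intros eps.
    destruct (half_pow_small (2 * Q) eps (cond_pos eps)) as [N HN].
    exists N. intros a b ha hb.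
    pose proof (pic_cauchy hh gg H L Gb al c hp hc N a s ha hs).
    pose proof (pic_cauchy hh gg H L Gb al c hp hc N b s hb hs). fold Q in H0, H1.
    replace (pic hh gg al a s - pic hh gg al b s) with
      ((pic hh gg al a s - pic hh gg al N s) - (pic hh gg al b s - pic hh gg al N s)) by ring.
    eapply Rle_lt_trans. apply Rabs_triang. rewrite Rabs_Ropp. lra. }
  destruct hfin as [l Hl]. unfold ulim. rewrite (is_lim_seq_unique _ _ Hl). simpl.
  apply is_lim_seq_Reals in Hl.
  apply le_epsilon. intros eps he.
  destruct (Hl eps he) as [N HN].
  specialize (HN (max N n) (Nat.le_max_l _ _)). unfold R_dist in HN.
  pose proof (pic_cauchy hh gg H L Gb al c hp hc n (max N n) s (Nat.le_max_r _ _) hs). fold Q in H0.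
  replace (l - pic hh gg al n s) with (- (pic hh gg al (max N n) s - l) + (pic hh gg al (max N n) s - pic hh gg al n s)) by ring.
  eapply Rle_trans. apply Rabs_triang. rewrite Rabs_Ropp. lra.
Qed.

Lemma tri3 a b c : Rabs (a + b - c) <= Rabs a + Rabs b + Rabs c.
Proof.
  unfold Rminus. eapply Rle_trans. apply Rabs_triang. rewrite Rabs_Ropp.
  pose proof (Rabs_triang a b). lra.
Qed.

Lemma zero_of_small x K : (forall n, Rabs x <= K * (/2) ^ n) -> x = 0.
Proof.
  intros H. destruct (Req_dec x 0) as [|hne]; auto. exfalso.
  assert (hx : 0 < Rabs x) by (apply Rabs_pos_lt; auto).
  destruct (half_pow_small K (Rabs x) hx) as [N HN]. specialize (H N). lra.
Qed.

Lemma ulim_cont hh gg H L Gb al c : picH hh gg H L Gb -> 0 < c ->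
  forall x, 0 <= x <= c -> cont_within (fun y => 0 <= y <= c) (ulim hh gg al) x.
Proof.
  intros hp hc x hx eps he.
  set (Q := 2 * (c * (c * H * Gb) + 1) * exp ((2 * c * H * L + 1) * c)).
  destruct (half_pow_small Q (eps / 3) ltac:(lra)) as [N HN].
  destruct (pic_cont hh gg H L Gb al hp N x (eps / 3) ltac:(lra)) as [d [hd Hd]].
  exists d; split; auto. intros y hy hyx.
  destruct (Req_dec y x) as [->|hne]. { rewrite Rminus_diag, Rabs_R0; lra. }
  assert (h1 := ulim_bound hh gg H L Gb al c hp hc y N hy). fold Q in h1.
  assert (h2 := ulim_bound hh gg H L Gb al c hp hc x N hx). fold Q in h2.
  assert (h3 : Rabs (pic hh gg al N y - pic hh gg al N x) < eps / 3).
  { apply Hd. split. unfold D_x, no_cond; auto. simpl; unfold R_dist; exact hyx. }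
  replace (ulim hh gg al y - ulim hh gg al x) with
    ((ulim hh gg al y - pic hh gg al N y) + (pic hh gg al N y - pic hh gg al N x) - (ulim hh gg al x - pic hh gg al N x)) by ring.
  eapply Rle_lt_trans. apply tri3. lra.
Qed.

Lemma Qn_nonneg c H L Gb n : 0 < c -> 0 <= H -> 0 <= Gb ->
  0 <= 2 * (c * (c * H * Gb) + 1) * exp ((2 * c * H * L + 1) * c) * (/2) ^ n.
Proof.
  intros. assert (0 < (/2)^n) by (apply pow_lt; lra).
  assert (0 <= c * H * Gb) by (repeat apply Rmult_le_pos; lra).
  assert (0 <= c * (c * H * Gb)) by (apply Rmult_le_pos; lra).
  pose proof (exp_pos ((2 * c * H * L + 1) * c)).
  repeat apply Rmult_le_pos; lra.
Qed.

Lemma picard_exists hh gg H L Gb al c : picH hh gg H L Gb -> 0 < c ->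
  exists U V : R -> R, (forall s, derivable_pt_lim U s (V s)) /\
    (forall s, 0 <= s <= c -> derivable_pt_lim V s (- (hh s * gg (U s)))) /\
    U 0 = 0 /\ V 0 = al.
Proof.
  intros hp hc. pose proof hp as [hH [hL [hG [hhc [hb [hl hgb]]]]]].
  set (Q := 2 * (c * (c * H * Gb) + 1) * exp ((2 * c * H * L + 1) * c)).
  set (uh := fun t => ulim hh gg al (clip 0 c t)).
  assert (huh : forall t, continuity_pt uh t).
  { apply (cont_clip (fun y => 0 <= y <= c)); [lra | auto |]. apply (ulim_cont hh gg H L Gb al c hp hc). }
  set (phi := fun t => hh t * gg (uh t)).
  assert (hphi : forall t, continuity_pt phi t) by (apply (phi_cont hh gg H L Gb); auto).
  exists (fun s => al * s - Iop (Iop phi) s), (fun s => al - Iop phi s).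
  assert (Heq : forall s, 0 <= s <= c -> al * s - Iop (Iop phi) s = ulim hh gg al s).
  { intros s hs. apply Rminus_diag_uniq.
    apply (zero_of_small _ ((c * c * H * L + 1) * Q)). intros n.
    assert (h1 := ulim_bound hh gg H L Gb al c hp hc s (S n) hs). fold Q in h1.
    assert (h2 : Rabs (al * s - Iop (Iop phi) s - pic hh gg al (S n) s) <= c * (c * (H * L * (Q * (/2)^n)))).
    { simpl.
      replace (al * s - Iop (Iop phi) s - (al * s - Iop (Iop (fun t => hh t * gg (pic hh gg al n t))) s))
        with (- (Iop (Iop phi) s - Iop (Iop (fun t => hh t * gg (pic hh gg al n t))) s)) by ring.
      rewrite Rabs_Ropp, dbl_minus; auto.
      2: { apply (phi_cont hh gg H L Gb); auto. apply (pic_cont hh gg H L Gb al hp). }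
      assert (hQ : 0 <= Q * (/2)^n).
      { apply Qn_nonneg; lra. }
      eapply Rle_trans. apply dbl_const_bound with (K := H * L * (Q * (/2)^n)).
      - intros t. apply continuity_pt_minus; auto. apply (phi_cont hh gg H L Gb); auto. apply (pic_cont hh gg H L Gb al hp).
      - lra.
      - apply Rmult_le_pos; [apply Rmult_le_pos|]; lra.
      - intros t ht. unfold phi. rewrite <- Rmult_minus_distr_l, Rabs_mult.
        replace (H * L * (Q * (/ 2) ^ n)) with (H * (L * (Q * (/ 2) ^ n))) by ring.
        apply Rmult_le_compat; auto using Rabs_pos.
        eapply Rle_trans. apply hl. apply Rmult_le_compat_l; [lra|].
        unfold uh. rewrite clip_id by lra. apply ulim_bound; auto; lra.
      - assert (0 <= H * L * (Q * (/2)^n)) by (apply Rmult_le_pos; [apply Rmult_le_pos|]; lra).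
        assert (s * (H * L * (Q * (/ 2) ^ n)) <= c * (H * L * (Q * (/ 2) ^ n))) by (apply Rmult_le_compat_r; lra).
        apply Rmult_le_compat; try lra. apply Rmult_le_pos; lra. }
    assert (hp2 : (/2) ^ S n = (/2)^n * (1/2)) by (simpl; field).
    rewrite hp2 in h1.
    assert (0 <= Q * (/2)^n).
    { apply Qn_nonneg; lra. }
    replace (al * s - Iop (Iop phi) s - ulim hh gg al s) with
      ((al * s - Iop (Iop phi) s - pic hh gg al (S n) s) - (ulim hh gg al s - pic hh gg al (S n) s)) by ring.
    eapply Rle_trans. unfold Rminus at 1. apply Rabs_triang. rewrite Rabs_Ropp.
    replace ((c * c * H * L + 1) * Q * (/ 2) ^ n) with (c * (c * (H * L * (Q * (/ 2) ^ n))) + Q * (/2)^n) by ring.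
    lra. }
  split; [|split; [|split]].
  - intros s. apply Iop_deriv2, hphi.
  - intros s hs. replace (hh s * gg (al * s - Iop (Iop phi) s)) with (phi s).
    apply Iop_deriv1, hphi. unfold phi, uh. rewrite clip_id by lra. rewrite Heq; auto.
  - simpl. rewrite Iop_0. ring.
  - simpl. rewrite Iop_0. ring.
Qed.

Definition wsol (hh gg : R -> R) (t : R) (u du : R -> R) : Prop :=
  forall s, 0 <= s <= t -> has_deriv_within (interval0 t) u s (du s) /\
    has_deriv_within (interval0 t) du s (- (hh s * gg (u s))).

Lemma wsol_sub hh gg t t' u du : wsol hh gg t u du -> 0 <= t' <= t -> wsol hh gg t' u du.
Proof.
  intros H ht s hs. destruct (H s ltac:(lra)) as [h1 h2].
  split; (eapply deriv_within_sub; [|eassumption]); unfold interval0; intros; lra.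
Qed.

Lemma cont_within_of_pt (f : R -> R) a b x : continuity_pt f x -> cont_within (fun y => a <= y <= b) f x.
Proof.
  intros H eps he. destruct (H eps he) as [d [hd Hd]]. exists d; split; auto.
  intros y hy hyx. destruct (Req_dec y x) as [->|hne]. { rewrite Rminus_diag, Rabs_R0; lra. }
  apply (Hd y). split. unfold D_x, no_cond; auto. simpl; unfold R_dist; exact hyx.
Qed.

Lemma cont_within_ext (f g : R -> R) a b x : a <= x <= b -> (forall y, a <= y <= b -> f y = g y) ->
  cont_within (fun y => a <= y <= b) g x -> cont_within (fun y => a <= y <= b) f x.
Proof.
  intros hx he H eps hep. destruct (H eps hep) as [d [hd Hd]]. exists d; split; auto.
  intros y hy hyx. rewrite !he; auto.
Qed.

Lemma wd_clip_cont (f df : R -> R) t : 0 <= t ->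
  (forall s, 0 <= s <= t -> has_deriv_within (interval0 t) f s (df s)) ->
  forall x, continuity_pt (fun y => f (clip 0 t y)) x.
Proof.
  intros ht H. apply (cont_clip (interval0 t)); auto.
  intros x hx. eapply deriv_within_cont. apply H; auto.
Qed.

Lemma energy hh gg H L t x dx y dy : 0 <= t -> 0 <= H -> 0 <= L ->
  (forall s, Rabs (hh s) <= H) -> (forall a b, Rabs (gg a - gg b) <= L * Rabs (a - b)) ->
  wsol hh gg t x dx -> wsol hh gg t y dy ->
  let E := fun s => (x s - y s) * (x s - y s) + (dx s - dy s) * (dx s - dy s) in
  E t <= E 0 * exp ((1 + H * L) * t) /\ E 0 <= E t * exp ((1 + H * L) * t).
Proof.
  intros ht hH hL hb hl hx hy E. set (K := 1 + H * L).
  assert (hK : 0 < K) by (unfold K; nra).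
  destruct (Req_dec t 0) as [->|ht0].
  { rewrite Rmult_0_r, exp_0, Rmult_1_r. lra. }
  assert (htp : 0 < t) by lra.
  set (dE := fun s => 2 * (x s - y s) * (dx s - dy s) + 2 * (dx s - dy s) * (- (hh s * gg (x s)) + hh s * gg (y s))).
  assert (hdE : forall s, 0 < s < t -> derivable_pt_lim E s (dE s)).
  { intros s hs.
    assert (hI : forall z, 0 < z < t -> interval0 t z) by (unfold interval0; intros; lra).
    destruct (hx s ltac:(lra)) as [hx1 hx2]. destruct (hy s ltac:(lra)) as [hy1 hy2].
    apply (deriv_interior _ _ _ _ 0 t hs hI) in hx1, hx2, hy1, hy2.
    pose proof (derivable_pt_lim_minus x y s _ _ hx1 hy1) as hd.
    pose proof (derivable_pt_lim_minus dx dy s _ _ hx2 hy2) as he.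
    pose proof (derivable_pt_lim_mult _ _ s _ _ hd hd) as hdd.
    pose proof (derivable_pt_lim_mult _ _ s _ _ he he) as hee.
    pose proof (derivable_pt_lim_plus _ _ s _ _ hdd hee) as hE.
    unfold E, dE. unfold plus_fct, mult_fct, minus_fct in hE.
    replace (2 * (x s - y s) * (dx s - dy s) + 2 * (dx s - dy s) * (- (hh s * gg (x s)) + hh s * gg (y s)))
      with ((dx s - dy s) * (x s - y s) + (x s - y s) * (dx s - dy s) +
            ((- (hh s * gg (x s)) - - (hh s * gg (y s))) * (dx s - dy s) + (dx s - dy s) * (- (hh s * gg (x s)) - - (hh s * gg (y s))))) by ring.
    exact hE. }
  assert (hbd : forall s, Rabs (dE s) <= K * E s).
  { intros s. unfold dE, E, K.
    set (d := x s - y s). set (e := dx s - dy s).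
    assert (h1 : Rabs (- (hh s * gg (x s)) + hh s * gg (y s)) <= H * (L * Rabs d)).
    { replace (- (hh s * gg (x s)) + hh s * gg (y s)) with (- (hh s * (gg (x s) - gg (y s)))) by ring.
      rewrite Rabs_Ropp, Rabs_mult. apply Rmult_le_compat; auto using Rabs_pos. }
    set (g := - (hh s * gg (x s)) + hh s * gg (y s)) in *.
    assert (Rabs (2 * d * e + 2 * e * g) <= 2 * Rabs d * Rabs e + 2 * Rabs e * Rabs g).
    { eapply Rle_trans. apply Rabs_triang. rewrite !Rabs_mult, (Rabs_right 2) by lra. lra. }
    assert (Rabs e * Rabs g <= Rabs e * (H * (L * Rabs d))) by (apply Rmult_le_compat_l; auto using Rabs_pos).
    assert (2 * Rabs d * Rabs e <= d * d + e * e).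
    { pose proof (Rabs_pos d); pose proof (Rabs_pos e).
      assert (Rabs d * Rabs d = d * d) by (rewrite <- Rabs_mult; apply Rabs_right; nra).
      assert (Rabs e * Rabs e = e * e) by (rewrite <- Rabs_mult; apply Rabs_right; nra).
      pose proof (Rle_0_sqr (Rabs d - Rabs e)). unfold Rsqr in *. nra. }
    assert (0 <= H * L) by nra.
    assert (Rabs e * (H * (L * Rabs d)) = (H * L) * (Rabs d * Rabs e)) by ring.
    assert (0 <= Rabs d * Rabs e) by (apply Rmult_le_pos; apply Rabs_pos).
    nra. }
  assert (hcx := wd_clip_cont x dx t ltac:(lra) (fun s hs => proj1 (hx s hs))).
  assert (hcdx := wd_clip_cont dx (fun s => - (hh s * gg (x s))) t ltac:(lra) (fun s hs => proj2 (hx s hs))).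
  assert (hcy := wd_clip_cont y dy t ltac:(lra) (fun s hs => proj1 (hy s hs))).
  assert (hcdy := wd_clip_cont dy (fun s => - (hh s * gg (y s))) t ltac:(lra) (fun s hs => proj2 (hy s hs))).
  set (Ec := fun s => (x (clip 0 t s) - y (clip 0 t s)) * (x (clip 0 t s) - y (clip 0 t s)) +
      (dx (clip 0 t s) - dy (clip 0 t s)) * (dx (clip 0 t s) - dy (clip 0 t s))).
  assert (hEc : forall s, continuity_pt Ec s).
  { intros s. unfold Ec.
    apply (continuity_pt_plus (fun s => (x (clip 0 t s) - y (clip 0 t s)) * (x (clip 0 t s) - y (clip 0 t s)))
             (fun s => (dx (clip 0 t s) - dy (clip 0 t s)) * (dx (clip 0 t s) - dy (clip 0 t s))));
    apply (continuity_pt_mult (fun s => _ - _) (fun s => _ - _));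
    apply (continuity_pt_minus (fun s => _) (fun s => _)); auto. }
  assert (hEEc : forall s, 0 <= s <= t -> E s = Ec s).
  { intros s hs. unfold E, Ec. rewrite clip_id; auto. }
  assert (hexp : forall k s, continuity_pt (fun s => 1 * exp (k * s)) s).
  { intros k s. apply derivable_continuous_pt. eexists. apply dexp. }
  split.
  - set (F := fun s => E s * (1 * exp ((- K) * s))).
    assert (HF : F t <= F 0).
    { apply (mono_le F (fun s => dE s * (1 * exp ((-K) * s)) + E s * (1 * (exp ((-K) * s) * ((-K) * 1)))) 0 t); try lra.
      - intros s hs. apply (derivable_pt_lim_mult E (fun s => 1 * exp ((-K) * s))); auto. apply dexp.
      - intros s hs. pose proof (hbd s). apply Rabs_le_between in H0. pose proof (exp_pos ((-K) * s)). nra.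
      - apply (cont_within_ext _ (fun s => Ec s * (1 * exp ((- K) * s)))). lra.
        intros z hz. unfold F. rewrite hEEc; auto.
        apply cont_within_of_pt. apply (continuity_pt_mult Ec (fun s => 1 * exp ((-K) * s))); auto.
      - apply (cont_within_ext _ (fun s => Ec s * (1 * exp ((- K) * s)))). lra.
        intros z hz. unfold F. rewrite hEEc; auto.
        apply cont_within_of_pt. apply (continuity_pt_mult Ec (fun s => 1 * exp ((-K) * s))); auto. }
    unfold F in HF. rewrite Rmult_0_r, exp_0, !Rmult_1_l, Rmult_1_r in HF.
    assert (exp ((-K) * t) * exp (K * t) = 1) by (rewrite <- exp_plus; replace (-K * t + K * t) with 0 by ring; apply exp_0).
    pose proof (exp_pos (K * t)).
    apply (Rmult_le_compat_r (exp (K * t))) in HF; [|lra].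
    rewrite Rmult_assoc, H0, Rmult_1_r in HF. exact HF.
  - set (F := fun s => - E s * (1 * exp (K * s))).
    assert (HF : F t <= F 0).
    { apply (mono_le F (fun s => - dE s * (1 * exp (K * s)) + - E s * (1 * (exp (K * s) * (K * 1)))) 0 t); try lra.
      - intros s hs. apply (derivable_pt_lim_mult (fun s => - E s) (fun s => 1 * exp (K * s))); auto.
        apply (derivable_pt_lim_opp E); auto. apply dexp.
      - intros s hs. pose proof (hbd s). apply Rabs_le_between in H0. pose proof (exp_pos (K * s)). nra.
      - apply (cont_within_ext _ (fun s => - Ec s * (1 * exp (K * s)))). lra.
        intros z hz. unfold F. rewrite hEEc; auto.
        apply cont_within_of_pt. apply (continuity_pt_mult (fun s => - Ec s) (fun s => 1 * exp (K * s))); auto.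
        apply (continuity_pt_opp Ec); auto.
      - apply (cont_within_ext _ (fun s => - Ec s * (1 * exp (K * s)))). lra.
        intros z hz. unfold F. rewrite hEEc; auto.
        apply cont_within_of_pt. apply (continuity_pt_mult (fun s => - Ec s) (fun s => 1 * exp (K * s))); auto.
        apply (continuity_pt_opp Ec); auto. }
    unfold F in HF. rewrite Rmult_0_r, exp_0, !Rmult_1_l, Rmult_1_r in HF. lra.
Qed.

Lemma wd_cont_sub (u du : R -> R) t a b x : 0 <= a -> b <= t -> a <= x <= b ->
  (forall s, 0 <= s <= t -> has_deriv_within (interval0 t) u s (du s)) ->
  cont_within (fun y => a <= y <= b) u x.
Proof.
  intros ha hb hx H.
  apply (cont_within_ext _ (fun y => u (clip 0 t y))); auto.
  intros y hy. rewrite clip_id; auto; lra.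
  apply cont_within_of_pt. apply (wd_clip_cont u du t); auto; lra.
Qed.

Lemma mono_within (u du : R -> R) t a b : 0 <= a <= b -> b <= t ->
  (forall s, 0 <= s <= t -> has_deriv_within (interval0 t) u s (du s)) ->
  (forall s, a < s < b -> du s <= 0) -> u b <= u a.
Proof.
  intros hab hbt H hneg.
  apply (mono_le u du a b); [lra| | exact hneg | |].
  - intros x hx. apply (deriv_interior (interval0 t) u x (du x) 0 t); [lra| unfold interval0; intros; lra | apply H; lra].
  - apply (wd_cont_sub u du t); auto; lra.
  - apply (wd_cont_sub u du t); auto; lra.
Qed.

Lemma deriv_within_minus_lin (D : R -> Prop) u x d k :
  has_deriv_within D u x d -> has_deriv_within D (fun z => u z - k * z) x (d - k).
Proof.
  intros H eps he. destruct (H eps he) as [del [hd Hd]]. exists del; split; auto.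
  intros y hy hne hyx. specialize (Hd y hy hne hyx).
  assert (y - x <> 0) by lra.
  replace ((u y - k * y - (u x - k * x)) / (y - x) - (d - k)) with ((u y - u x) / (y - x) - d) by (field; auto).
  exact Hd.
Qed.

Lemma concave (u du ddu : R -> R) t : 0 <= t ->
  (forall s, 0 <= s <= t -> has_deriv_within (interval0 t) u s (du s) /\ has_deriv_within (interval0 t) du s (ddu s)) ->
  (forall s, 0 <= s <= t -> ddu s <= 0) -> forall s, 0 <= s <= t -> u s <= u 0 + du 0 * s.
Proof.
  intros ht H hneg s hs.
  assert (hdu : forall r, 0 <= r <= t -> du r <= du 0).
  { intros r hr. apply (mono_within du ddu t 0 r); try lra.
    intros; apply H; auto. intros; apply hneg; lra. }
  assert (HH : (fun z => u z - du 0 * z) s <= (fun z => u z - du 0 * z) 0).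
  { apply (mono_within (fun z => u z - du 0 * z) (fun z => du z - du 0) t 0 s); try lra.
    - intros r hr. apply deriv_within_minus_lin. apply H; auto.
    - intros r hr. pose proof (hdu r ltac:(lra)). lra. }
  simpl in HH. lra.
Qed.

Lemma deriv_min (D : R -> Prop) f x d r : 0 < r -> (forall y, x - r < y < x + r -> D y) ->
  has_deriv_within D f x d -> (forall y, x - r < y < x + r -> f x <= f y) -> d = 0.
Proof.
  intros hr hD H hmin.
  destruct (Rtotal_order d 0) as [hlt|[heq|hgt]]; auto; exfalso.
  - destruct (H (- d) ltac:(lra)) as [del [hd Hd]].
    set (k := Rmin del r / 2).
    assert (hk : 0 < k) by (unfold k; assert (0 < Rmin del r) by (apply Rmin_pos; lra); lra).
    assert (hk1 : k < del) by (unfold k; pose proof (Rmin_l del r); lra).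
    assert (hk2 : k < r) by (unfold k; pose proof (Rmin_r del r); lra).
    specialize (Hd (x + k) ltac:(apply hD; lra) ltac:(lra) ltac:(rewrite Rabs_right; lra)).
    apply Rabs_def2 in Hd. replace (x + k - x) with k in Hd by ring.
    assert ((f (x + k) - f x) / k < 0) by lra.
    assert (f x <= f (x + k)) by (apply hmin; lra).
    assert (0 <= (f (x + k) - f x) / k) by (apply Rdiv_le_0_compat; lra). lra.
  - destruct (H d ltac:(lra)) as [del [hd Hd]].
    set (k := Rmin del r / 2).
    assert (hk : 0 < k) by (unfold k; assert (0 < Rmin del r) by (apply Rmin_pos; lra); lra).
    assert (hk1 : k < del) by (unfold k; pose proof (Rmin_l del r); lra).
    assert (hk2 : k < r) by (unfold k; pose proof (Rmin_r del r); lra).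
    specialize (Hd (x - k) ltac:(apply hD; lra) ltac:(lra) ltac:(rewrite Rabs_left; lra)).
    apply Rabs_def2 in Hd. replace (x - k - x) with (- k) in Hd by ring.
    assert (f x <= f (x - k)) by (apply hmin; lra).
    assert ((f (x - k) - f x) / - k <= 0).
    { unfold Rdiv. rewrite <- Ropp_inv_permute by lra.
      assert (0 < / k) by (apply Rinv_0_lt_compat; lra). nra. }
    lra.
Qed.

Definition Pos (Phi : R -> R -> R) c al := forall s, 0 < s <= c -> 0 < Phi al s.

Lemma shoot (Phi : R -> R -> R) c a b s1 :
  0 < c -> a < b -> 0 < s1 < c ->
  (forall al s, a <= al <= b -> 0 <= s <= c -> forall eps, 0 < eps -> exists del, 0 < del /\
     forall be, a <= be <= b -> Rabs (be - al) < del -> Rabs (Phi be s - Phi al s) < eps) ->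
  (forall al, a <= al <= b -> Pos Phi c al -> exists rho, 0 < rho /\
     forall be, a <= be <= b -> Rabs (be - al) < rho -> Pos Phi c be) ->
  (forall al, a <= al <= b -> (forall s, 0 < s <= c -> 0 <= Phi al s) -> forall s, 0 < s < c -> Phi al s <> 0) ->
  Pos Phi c a -> Phi b s1 = 0 ->
  exists al, a < al < b /\ Phi al c = 0 /\ forall s, 0 < s < c -> 0 < Phi al s.
Proof.
  intros hc hab hs1 H1 H2 H3 Pa Pb.
  set (S := fun al => a <= al <= b /\ forall g, a <= g <= al -> Pos Phi c g).
  assert (hbd : bound S) by (exists b; intros x [hx _]; lra).
  assert (hne : exists x, S x) by (exists a; split; [lra| intros g hg; replace g with a by lra; auto]).
  destruct (completeness S hbd hne) as [a1 [hub hlub]].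
  assert (ha1 : a <= a1) by (apply hub; destruct hne as [x hx]; split; [lra|intros g hg; replace g with a by lra; auto]).
  assert (ha1b : a1 <= b) by (apply hlub; intros x [hx _]; lra).
  assert (hi : forall g, a <= g < a1 -> Pos Phi c g).
  { intros g hg. apply NNPP. intros hn.
    assert (is_upper_bound S g).
    { intros x [hx Hx]. apply Rnot_lt_le. intros hgx. apply hn. apply Hx. lra. }
    specialize (hlub g H). lra. }
  assert (hii : forall s, 0 < s <= c -> 0 <= Phi a1 s).
  { intros s hs. destruct (Req_dec a1 a) as [->|hna]. { left; apply Pa; auto. }
    apply Rnot_lt_le. intros hneg.
    destruct (H1 a1 s ltac:(lra) ltac:(lra) (- Phi a1 s) ltac:(lra)) as [del [hdel Hdel]].
    set (g := Rmax a (a1 - del / 2)).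
    assert (hg1 : a <= g) by apply Rmax_l.
    assert (hg2 : g < a1) by (unfold g; unfold Rmax; destruct Rle_dec; lra).
    assert (hg3 : a1 - del / 2 <= g) by apply Rmax_r.
    specialize (Hdel g ltac:(lra) ltac:(rewrite Rabs_left; lra)).
    specialize (hi g ltac:(lra) s hs). apply Rabs_def2 in Hdel. lra. }
  assert (hiii : ~ Pos Phi c a1).
  { intros Pa1. destruct (H2 a1 ltac:(lra) Pa1) as [rho [hrho Hrho]].
    destruct (Req_dec a1 b) as [->|hnb].
    { specialize (Pa1 s1 ltac:(lra)). lra. }
    set (a' := Rmin b (a1 + rho / 2)).
    assert (h1 : a' <= b) by apply Rmin_l.
    assert (h2 : a' <= a1 + rho / 2) by apply Rmin_r.
    assert (h3 : a1 < a') by (unfold a', Rmin; destruct Rle_dec; lra).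
    assert (S a').
    { split; [lra|]. intros g hg. destruct (Rlt_dec g a1). apply hi; lra.
      apply Hrho; [lra|]. rewrite Rabs_right; lra. }
    specialize (hub a' H). lra. }
  assert (hstar : exists s, 0 < s <= c /\ Phi a1 s = 0).
  { apply NNPP. intros hn. apply hiii. intros s hs.
    destruct (hii s hs) as [hp|hz]; auto. exfalso. apply hn. exists s; auto. }
  destruct hstar as [st [hst Hst]].
  assert (hstc : st = c).
  { destruct (Req_dec st c); auto. exfalso. apply (H3 a1 ltac:(lra) hii st ltac:(lra)); auto. }
  subst st.
  assert (ha1a : a1 <> a) by (intros ->; apply hiii; auto).
  assert (ha1b' : a1 <> b).
  { intros ->. apply (H3 b ltac:(lra) hii s1 hs1); auto. }
  exists a1. split; [lra|]. split; auto.
  intros s hs. destruct (hii s ltac:(lra)) as [hp|hz]; auto.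
  exfalso. apply (H3 a1 ltac:(lra) hii s hs); auto.
Qed.

Lemma deriv_within_lin_minus (D : R -> Prop) u x d k :
  has_deriv_within D u x d -> has_deriv_within D (fun z => k * z - u z) x (k - d).
Proof.
  intros H eps he. destruct (H eps he) as [del [hd Hd]]. exists del; split; auto.
  intros y hy hne hyx. specialize (Hd y hy hne hyx).
  assert (y - x <> 0) by lra.
  replace ((k * y - u y - (k * x - u x)) / (y - x) - (k - d)) with (- ((u y - u x) / (y - x) - d)) by (field; auto).
  rewrite Rabs_Ropp. exact Hd.
Qed.

Lemma h0_nonneg h : (forall s, 0 <= s -> cont_within halfline h s) -> (forall s, 0 < s -> 0 < h s) -> 0 <= h 0.
Proof.
  intros hc hp. apply Rnot_lt_le. intros hneg.
  destruct (hc 0 (Rle_refl 0) (- h 0) ltac:(lra)) as [d [hd Hd]].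
  specialize (Hd (d / 2) ltac:(unfold halfline; lra) ltac:(rewrite Rminus_0_r, Rabs_right; lra)).
  specialize (hp (d / 2) ltac:(lra)). apply Rabs_def2 in Hd. lra.
Qed.

Lemma hh_nonneg h c s : 0 <= c -> (forall s, 0 <= s -> cont_within halfline h s) -> (forall s, 0 < s -> 0 < h s) ->
  0 <= h (clip 0 c s).
Proof.
  intros hc hco hp. destruct (clip_in 0 c s hc) as [[h1|h1] h2].
  - left; apply hp; auto.
  - rewrite <- h1. apply h0_nonneg; auto.
Qed.

Lemma const0_deriv (D : R -> Prop) x : has_deriv_within D (fun _ => 0) x 0.
Proof. apply deriv_within_of. apply derivable_pt_lim_const. Qed.

Lemma sq_abs x : Rabs x * Rabs x = x * x.
Proof. rewrite <- Rabs_mult; apply Rabs_right; apply Rle_ge; pose proof (Rle_0_sqr x); unfold Rsqr in *; lra. Qed.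

Theorem lemma2p8 (p : R) (h : R -> R)
  (hp : 1 < p)
  (hcont : forall s, 0 <= s -> cont_within halfline h s)
  (hpos : forall s, 0 < s -> 0 < h s)
  (wl dwl wu dwu : R -> R)
  (hsl : is_sol h p halfline wl dwl)
  (hsu : is_sol h p halfline wu dwu)
  (hl0 : wl 0 = 0) (hu0 : wu 0 = 0)
  (hd : 0 < dwl 0 /\ dwl 0 < dwu 0)
  (hlpos : forall s, 0 < s -> 0 < wl s)
  (hupos : forall s, 0 < s -> 0 < wu s)
  (w dw : R -> R) (s0 : R)
  (hs : is_sol h p halfline w dw)
  (hw0 : w 0 = 0)
  (hdw : dwl 0 < dw 0 /\ dw 0 < dwu 0)
  (hs0 : 0 < s0)
  (hwpos : forall s, 0 < s < s0 -> 0 < w s)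
  (hws0 : w s0 = 0) :
  exists C : R, 0 < C /\ forall c : R, C <= c ->
    exists w1 dw1 w2 dw2 : R -> R,
      is_sol h p (interval0 c) w1 dw1 /\ w1 0 = 0 /\ w1 c = 0 /\
      (forall s, 0 < s < c -> 0 < w1 s) /\
      is_sol h p (interval0 c) w2 dw2 /\ w2 0 = 0 /\ w2 c = 0 /\
      (forall s, 0 < s < c -> 0 < w2 s) /\
      dwl 0 < dw1 0 /\ dw1 0 < dw 0 /\ dw 0 < dw2 0 /\ dw2 0 < dwu 0.
Proof.
  rename hs into hsw.
  exists (s0 + 1). split; [lra|]. intros c hc.
  assert (hc0 : 0 < c) by lra.
  destruct hd as [hdl0 hdlu]. destruct hdw as [hdw1 hdw2].
  set (M := dwu 0 * c).
  assert (hM : 0 < M) by (unfold M; nra).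
  set (hh := fun s => h (clip 0 c s)).
  set (gg := fun x => ppow p (clip (- M) M x)).
  set (L := p * Rpower M (p - 1)).
  assert (hL : 0 < L) by (unfold L; pose proof (Rpower_pos' M (p - 1)); nra).
  assert (hhnn : forall s, 0 <= hh s) by (intros; unfold hh; apply hh_nonneg; auto; lra).
  assert (hhc : forall t, continuity_pt hh t).
  { unfold hh. apply (cont_clip halfline); [lra| unfold halfline; intros; lra |]. intros; apply hcont; lra. }
  destruct (continuity_ab_maj hh 0 c ltac:(lra) (fun t _ => hhc t)) as [Mx [hMx hMxr]].
  set (H := hh Mx).
  assert (hH : 0 <= H) by apply hhnn.
  assert (hHb : forall t, Rabs (hh t) <= H).
  { intros t. rewrite Rabs_right by (apply Rle_ge, hhnn).
    replace (hh t) with (hh (clip 0 c t)). apply hMx, clip_in; lra.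
    unfold hh. rewrite (clip_id 0 c (clip 0 c t)); auto. apply clip_in; lra. }
  assert (hclipM : forall x, Rabs (clip (- M) M x) <= M).
  { intros x. apply Rabs_le. apply clip_in; lra. }
  assert (hgl : forall x y, Rabs (gg x - gg y) <= L * Rabs (x - y)).
  { intros x y. unfold gg. eapply Rle_trans. apply (ppow_lip p M); auto.
    apply Rmult_le_compat_l; [lra|]. apply clip_lip; lra. }
  assert (hg0 : gg 0 = 0) by (unfold gg; rewrite clip_id by lra; apply ppow_0).
  assert (hgb : forall x, Rabs (gg x) <= L * M).
  { intros x. unfold gg. replace (ppow p (clip (- M) M x)) with (ppow p (clip (- M) M x) - ppow p 0) by (rewrite ppow_0; ring).
    eapply Rle_trans. apply (ppow_lip p M); auto. rewrite Rabs_R0; lra.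
    apply Rmult_le_compat_l; [lra|]. rewrite Rminus_0_r. auto. }
  assert (hpic : picH hh gg H L (L * M)).
  { repeat split; auto; try lra. apply Rmult_le_pos; lra. }
  assert (fam : forall al, {UV : (R -> R) * (R -> R) |
     (forall s, derivable_pt_lim (fst UV) s (snd UV s)) /\
     (forall s, 0 <= s <= c -> derivable_pt_lim (snd UV) s (- (hh s * gg (fst UV s)))) /\
     fst UV 0 = 0 /\ snd UV 0 = al}).
  { intros al. apply constructive_indefinite_description.
    destruct (picard_exists hh gg H L (L * M) al c hpic hc0) as [U [V [h1 [h2 [h3 h4]]]]].
    exists (U, V). simpl. auto. }
  set (U := fun al => fst (proj1_sig (fam al))).
  set (V := fun al => snd (proj1_sig (fam al))).
  assert (hUV : forall al, wsol hh gg c (U al) (V al) /\ U al 0 = 0 /\ V al 0 = al).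
  { intros al. unfold U, V. destruct (fam al) as [[U0 V0] [h1 [h2 [h3 h4]]]]. simpl in *.
    split; [|auto]. intros s hs. split; apply deriv_within_of; auto. }
  set (K := 1 + H * L).
  assert (hK : 0 < K) by (unfold K; nra).
  assert (dep : forall al be s, 0 <= s <= c ->
    (U al s - U be s) * (U al s - U be s) + (V al s - V be s) * (V al s - V be s) <=
    (al - be) * (al - be) * exp (K * c)).
  { intros al be s hs.
    destruct (hUV al) as [ha [ha0 ha1]]. destruct (hUV be) as [hb [hb0 hb1]].
    destruct (energy hh gg H L s (U al) (V al) (U be) (V be) ltac:(lra) hH ltac:(lra) hHb hgl
      (wsol_sub hh gg c s (U al) (V al) ha ltac:(lra)) (wsol_sub hh gg c s (U be) (V be) hb ltac:(lra))) as [e1 _].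
    simpl in e1. rewrite ha0, hb0, ha1, hb1 in e1. fold K in e1.
    eapply Rle_trans. apply e1.
    replace ((0 - 0) * (0 - 0) + (al - be) * (al - be)) with ((al - be) * (al - be)) by ring.
    apply Rmult_le_compat_l. pose proof (Rle_0_sqr (al - be)); unfold Rsqr in *; lra. apply exp_mono. apply Rmult_le_compat_l; lra. }
  assert (close : forall al eps, 0 < eps -> exists del, 0 < del /\ forall be, Rabs (be - al) < del ->
      forall s, 0 <= s <= c -> Rabs (U be s - U al s) < eps /\ Rabs (V be s - V al s) < eps).
  { intros al eps he. set (Z := exp (K * c)).
    assert (hZ : 1 <= Z) by (unfold Z; rewrite <- exp_0; apply exp_mono; nra).
    exists (eps / Z). split. apply Rdiv_lt_0_compat; lra.
    intros be hbe s hs. specialize (dep be al s hs). fold Z in dep.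
    assert (hb2 : (be - al) * (be - al) < (eps / Z) * (eps / Z)).
    { pose proof (Rabs_pos (be - al)).
      replace ((be - al) * (be - al)) with (Rabs (be - al) * Rabs (be - al)) by apply sq_abs.
      apply Rmult_le_0_lt_compat; auto. }
    assert (hez : (eps / Z) * (eps / Z) * Z <= eps * eps).
    { replace ((eps / Z) * (eps / Z) * Z) with (eps * eps / Z) by (field; lra).
      apply (Rmult_le_reg_r Z); [lra|]. unfold Rdiv. rewrite Rmult_assoc, Rinv_l by lra. nra. }
    assert (hlt : (U be s - U al s) * (U be s - U al s) + (V be s - V al s) * (V be s - V al s) < eps * eps).
    { eapply Rle_lt_trans. apply dep. 
      assert ((be - al) * (be - al) * Z < eps / Z * (eps / Z) * Z) by (apply Rmult_lt_compat_r; lra). lra. }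
    split.
    - apply Rnot_le_lt. intros hge. 
      assert (Rabs (U be s - U al s) * Rabs (U be s - U al s) = (U be s - U al s) * (U be s - U al s))
        by apply sq_abs.
      assert (eps * eps <= Rabs (U be s - U al s) * Rabs (U be s - U al s)) by (apply Rmult_le_compat; lra).
      pose proof (Rle_0_sqr (V be s - V al s)). unfold Rsqr in *. lra.
    - apply Rnot_le_lt. intros hge.
      assert (Rabs (V be s - V al s) * Rabs (V be s - V al s) = (V be s - V al s) * (V be s - V al s))
        by apply sq_abs.
      assert (eps * eps <= Rabs (V be s - V al s) * Rabs (V be s - V al s)) by (apply Rmult_le_compat; lra).
      pose proof (Rle_0_sqr (U be s - U al s)). unfold Rsqr in *. lra. }
  assert (ident : forall al y dy t, 0 <= t <= c -> wsol hh gg t y dy -> y 0 = 0 -> dy 0 = al ->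
      forall s, 0 <= s <= t -> U al s = y s).
  { intros al y dy t ht hy hy0 hdy0 s hs.
    destruct (hUV al) as [ha [ha0 ha1]].
    destruct (energy hh gg H L s (U al) (V al) y dy ltac:(lra) hH ltac:(lra) hHb hgl
      (wsol_sub hh gg c s (U al) (V al) ha ltac:(lra)) (wsol_sub hh gg t s y dy hy ltac:(lra))) as [e1 _].
    simpl in e1. rewrite ha0, hy0, ha1, hdy0 in e1.
    replace ((0 - 0) * (0 - 0) + (al - al) * (al - al)) with 0 in e1 by ring.
    rewrite Rmult_0_l in e1. pose proof (Rle_0_sqr (U al s - y s)). pose proof (Rle_0_sqr (V al s - dy s)). unfold Rsqr in *. assert ((U al s - y s) * (U al s - y s) = 0) by lra. apply Rminus_diag_uniq. apply (Rmult_integral _ _) in H2. destruct H2; auto. }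
  assert (realsol : forall y dy t, is_sol h p halfline y dy -> 0 <= t <= c ->
      (forall s, 0 <= s <= t -> Rabs (y s) <= M) -> wsol hh gg t y dy).
  { intros y dy t hy ht hb s hs. destruct (hy s ltac:(unfold halfline; lra)) as [h1 h2].
    unfold hh, gg. rewrite (clip_id 0 c s) by lra.
    rewrite (clip_id (- M) M (y s)) by (apply Rabs_le_between, hb; auto).
    split; (eapply deriv_within_sub; [|eassumption]); unfold interval0, halfline; intros; lra. }
  assert (rconc : forall y dy t, is_sol h p halfline y dy -> 0 <= t ->
      (forall s, 0 <= s <= t -> 0 <= y s) -> forall s, 0 <= s <= t -> y s <= y 0 + dy 0 * s).
  { intros y dy t hy ht hnn. apply (concave y dy (fun s => - (h s * ppow p (y s))) t ht).
    - intros s hs. destruct (hy s ltac:(unfold halfline; lra)) as [h1 h2].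
      split; (eapply deriv_within_sub; [|eassumption]); unfold interval0, halfline; intros; lra.
    - intros s hs. assert (0 <= h s).
      { destruct (Req_dec s 0) as [->|]. apply h0_nonneg; auto. left; apply hpos; lra. }
      pose proof (ppow_nonneg p (y s) (hnn s hs)). nra. }
  assert (hposl : Pos U c (dwl 0)).
  { assert (hnn : forall s, 0 <= s <= c -> 0 <= wl s).
    { intros s hs. destruct (Req_dec s 0) as [->|]. lra. left; apply hlpos; lra. }
    assert (hbd : forall s, 0 <= s <= c -> Rabs (wl s) <= M).
    { intros s hs. rewrite Rabs_right by (apply Rle_ge, hnn; auto).
      pose proof (rconc wl dwl c hsl ltac:(lra) hnn s hs). rewrite hl0 in H0. unfold M. nra. }
    intros s hs. rewrite (ident (dwl 0) wl dwl c ltac:(lra) (realsol wl dwl c hsl ltac:(lra) hbd) hl0 eq_refl s ltac:(lra)).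
    apply hlpos; lra. }
  assert (hposu : Pos U c (dwu 0)).
  { assert (hnn : forall s, 0 <= s <= c -> 0 <= wu s).
    { intros s hs. destruct (Req_dec s 0) as [->|]. lra. left; apply hupos; lra. }
    assert (hbd : forall s, 0 <= s <= c -> Rabs (wu s) <= M).
    { intros s hs. rewrite Rabs_right by (apply Rle_ge, hnn; auto).
      pose proof (rconc wu dwu c hsu ltac:(lra) hnn s hs). rewrite hu0 in H0. unfold M. nra. }
    intros s hs. rewrite (ident (dwu 0) wu dwu c ltac:(lra) (realsol wu dwu c hsu ltac:(lra) hbd) hu0 eq_refl s ltac:(lra)).
    apply hupos; lra. }
  assert (hzero : U (dw 0) s0 = 0).
  { assert (hnn : forall s, 0 <= s <= s0 -> 0 <= w s).
    { intros s hs. destruct (Req_dec s 0) as [->|]. lra. destruct (Req_dec s s0) as [->|]. lra. left; apply hwpos; lra. }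
    assert (hbd : forall s, 0 <= s <= s0 -> Rabs (w s) <= M).
    { intros s hs. rewrite Rabs_right by (apply Rle_ge, hnn; auto).
      pose proof (rconc w dw s0 hsw ltac:(lra) hnn s hs). rewrite hw0 in H0. unfold M. nra. }
    rewrite (ident (dw 0) w dw s0 ltac:(lra) (realsol w dw s0 hsw ltac:(lra) hbd) hw0 eq_refl s0 ltac:(lra)).
    exact hws0. }
  assert (hopen : forall al, 0 < al -> Pos U c al -> exists rho, 0 < rho /\
      forall be, Rabs (be - al) < rho -> Pos U c be).
  { intros al hal hPa.
    destruct (hUV al) as [ha [ha0 ha1]].
    assert (hcV : cont_within (interval0 c) (V al) 0).
    { eapply deriv_within_cont. apply (proj2 (ha 0 ltac:(lra))). }
    destruct (hcV (al / 2) ltac:(lra)) as [d0 [hd0 Hd0]].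
    set (del := Rmin (d0 / 2) c).
    assert (hdel : 0 < del) by (unfold del; apply Rmin_pos; lra).
    assert (hdel1 : del <= d0 / 2) by apply Rmin_l.
    assert (hdel2 : del <= c) by apply Rmin_r.
    assert (hcU : forall x, continuity_pt (fun y => U al (clip 0 c y)) x).
    { apply (wd_clip_cont (U al) (V al) c); [lra|]. intros s hs_; apply (proj1 (ha s hs_)). }
    destruct (continuity_ab_min (fun y => U al (clip 0 c y)) del c hdel2 (fun x _ => hcU x)) as [mx [hmx hmxr]].
    simpl in hmx. rewrite (clip_id 0 c mx) in hmx by lra.
    set (m := U al mx).
    assert (hm : 0 < m) by (apply hPa; lra).
    destruct (close al (Rmin m (al / 4)) ltac:(apply Rmin_pos; lra)) as [rho [hrho Hrho]].
    exists rho. split; auto. intros be hbe s hs_.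
    assert (hmin1 : Rmin m (al / 4) <= m) by apply Rmin_l.
    assert (hmin2 : Rmin m (al / 4) <= al / 4) by apply Rmin_r.
    destruct (Rle_dec del s) as [hds|hds].
    - destruct (Hrho be hbe s ltac:(lra)) as [h1 _].
      specialize (hmx s ltac:(lra)). rewrite (clip_id 0 c s) in hmx by lra. fold m in hmx.
      apply Rabs_def2 in h1. lra.
    - destruct (hUV be) as [hb [hb0 hb1]].
      assert (HH : (fun z => al / 4 * z - U be z) s <= (fun z => al / 4 * z - U be z) 0).
      { apply (mono_within (fun z => al / 4 * z - U be z) (fun z => al / 4 - V be z) c 0 s); try lra.
        - intros r hr. apply deriv_within_lin_minus. apply (proj1 (hb r hr)).
        - intros r hr. destruct (Hrho be hbe r ltac:(lra)) as [_ h2].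
          assert (Rabs (V al r - al) < al / 2).
          { assert (hI : interval0 c r) by (unfold interval0; lra).
            assert (hR : Rabs (r - 0) < d0) by (rewrite Rminus_0_r, Rabs_right; lra).
            pose proof (Hd0 r hI hR) as Hx. rewrite ha1 in Hx. exact Hx. }
          apply Rabs_def2 in h2. apply Rabs_def2 in H0. lra. }
      simpl in HH. rewrite hb0 in HH. assert (0 < al / 4 * s) by (apply Rmult_lt_0_compat; lra). lra. }
  assert (hnotouch : forall al, 0 < al -> (forall s, 0 < s <= c -> 0 <= U al s) ->
      forall s, 0 < s < c -> U al s <> 0).
  { intros al hal hnn st hst hz.
    destruct (hUV al) as [ha [ha0 ha1]].
    set (r := Rmin st (c - st)).
    assert (hr : 0 < r) by (unfold r; apply Rmin_pos; lra).
    assert (hr1 : r <= st) by apply Rmin_l. assert (hr2 : r <= c - st) by apply Rmin_r.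
    assert (hV : V al st = 0).
    { apply (deriv_min (interval0 c) (U al) st (V al st) r hr).
      - unfold interval0; intros; lra.
      - apply (proj1 (ha st ltac:(lra))).
      - intros y hy. rewrite hz. destruct (Req_dec y 0) as [->|]. lra. apply hnn. lra. }
    assert (hz0 : wsol hh gg st (fun _ => 0) (fun _ => 0)).
    { intros s hs_. split. apply const0_deriv.
      replace (- (hh s * gg 0)) with 0 by (rewrite hg0; ring). apply const0_deriv. }
    destruct (energy hh gg H L st (U al) (V al) (fun _ => 0) (fun _ => 0) ltac:(lra) hH ltac:(lra) hHb hgl
      (wsol_sub hh gg c st (U al) (V al) ha ltac:(lra)) hz0) as [_ e2].
    simpl in e2. rewrite ha0, ha1, hz, hV in e2.
    replace ((0 - 0) * (0 - 0) + (0 - 0) * (0 - 0)) with 0 in e2 by ring.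
    rewrite Rmult_0_l in e2. nra. }
  destruct (hopen (dwl 0) hdl0 hposl) as [rho1 [hrho1 Hrho1]].
  set (b1 := Rmin ((dwl 0 + dw 0) / 2) (dwl 0 + rho1 / 2)).
  assert (hb1a : b1 <= (dwl 0 + dw 0) / 2) by apply Rmin_l.
  assert (hb1b : b1 <= dwl 0 + rho1 / 2) by apply Rmin_r.
  assert (hb1c : dwl 0 < b1) by (unfold b1, Rmin; destruct Rle_dec; lra).
  assert (hPb1 : Pos U c b1) by (apply Hrho1; rewrite Rabs_right; lra).
  destruct (shoot U c b1 (dw 0) s0 hc0 ltac:(lra) ltac:(lra)) as [a1 [ha1r [ha1c ha1p]]].
  { intros al s hal hs_ eps he. destruct (close al eps he) as [d [hd Hd]].
    exists d; split; auto. intros be _ hbe. apply (Hd be hbe s hs_). }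
  { intros al hal hPal. destruct (hopen al ltac:(lra) hPal) as [rho [hrho Hr]].
    exists rho; split; auto. }
  { intros al hal. apply hnotouch. lra. }
  { exact hPb1. }
  { exact hzero. }
  destruct (hopen (dwu 0) ltac:(lra) hposu) as [rho2 [hrho2 Hrho2]].
  set (b2 := Rmax ((dw 0 + dwu 0) / 2) (dwu 0 - rho2 / 2)).
  assert (hb2a : (dw 0 + dwu 0) / 2 <= b2) by apply Rmax_l.
  assert (hb2b : dwu 0 - rho2 / 2 <= b2) by apply Rmax_r.
  assert (hb2c : b2 < dwu 0) by (unfold b2, Rmax; destruct Rle_dec; lra).
  assert (hPb2 : Pos U c b2) by (apply Hrho2; rewrite Rabs_left; lra).
  destruct (shoot (fun al s => U (- al) s) c (- b2) (- dw 0) s0 hc0 ltac:(lra) ltac:(lra)) as [a2 [ha2r [ha2c ha2p]]].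
  { intros al s hal hs_ eps he. destruct (close (- al) eps he) as [d [hd Hd]].
    exists d; split; auto. intros be _ hbe. apply (Hd (- be)); auto.
    replace (- be - - al) with (- (be - al)) by ring. rewrite Rabs_Ropp; auto. }
  { intros al hal hPal. destruct (hopen (- al) ltac:(lra) hPal) as [rho [hrho Hr]].
    exists rho; split; auto. intros be _ hbe. apply Hr.
    replace (- be - - al) with (- (be - al)) by ring. rewrite Rabs_Ropp; auto. }
  { intros al hal. apply hnotouch. lra. }
  { unfold Pos. rewrite Ropp_involutive. exact hPb2. }
  { simpl. rewrite Ropp_involutive. exact hzero. }
  assert (toreal : forall al, 0 < al <= dwu 0 -> U al c = 0 -> (forall s, 0 < s < c -> 0 < U al s) ->
      is_sol h p (interval0 c) (U al) (V al)).
  { intros al hal hUc hUp.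
    destruct (hUV al) as [ha [ha0 ha1]].
    assert (hnn : forall s, 0 <= s <= c -> 0 <= U al s).
    { intros s hs_. destruct (Req_dec s 0) as [->|]. lra. destruct (Req_dec s c) as [->|]. lra. left; apply hUp; lra. }
    assert (hup : forall s, 0 <= s <= c -> U al s <= U al 0 + V al 0 * s).
    { apply (concave (U al) (V al) (fun s => - (hh s * gg (U al s))) c); [lra| exact ha |].
      intros s hs_. unfold gg. pose proof (hhnn s).
      assert (0 <= clip (- M) M (U al s)).
      { unfold clip, Rmax, Rmin. pose proof (hnn s hs_). repeat destruct Rle_dec; lra. }
      pose proof (ppow_nonneg p _ H1). nra. }
    intros s hs_. unfold interval0 in hs_. destruct (ha s hs_) as [h1 h2].
    split; auto.
    unfold hh, gg in h2. rewrite (clip_id 0 c s) in h2 by lra.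
    rewrite (clip_id (- M) M (U al s)) in h2; auto.
    pose proof (hup s hs_). pose proof (hnn s hs_). rewrite ha0, ha1 in H0.
    split; [lra|]. unfold M. nra. }
  destruct (hUV a1) as [_ [hU10 hV10]].
  destruct (hUV (- a2)) as [_ [hU20 hV20]].
  exists (U a1), (V a1), (U (- a2)), (V (- a2)).
  split; [apply toreal; auto; lra|].
  split; [auto|]. split; [auto|]. split; [auto|].
  split; [apply toreal; auto; lra|].
  split; [auto|]. split; [auto|]. split; [auto|].
  rewrite hV10, hV20. lra.
Qed.
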